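(* Let $\mu,\nu\in\mathcal{P}(\mathcal{X})$, $m>0$, take $m_1=m_2=m$ for the marginal cones (with $\mu(B_m)>0$, $\nu(B_m)>0$), let $\alpha$ be a tail function with $\alpha>0$, and let $\tilde\alpha$ be a tail function. For every $f\in\mathcal{F}^{\mu\otimes\nu}_{\alpha,0}$, \[ \int f(\cdot,y)\,\nu(dy)\in\mathcal{F}^{\mu}_{\alpha,\tilde\alpha}\quad\text{and}\quad\int f(x,\cdot)\,\mu(dx)\in\mathcal{F}^{\nu}_{\alpha,\tilde\alpha}. \] Moreover, identifying a function $g$ on $\mathcal{X}$ with the function $(x,y)\mapsto g(x)$ on $\mathcal{X}\times\mathcal{X}$, we have $\mathcal{G}^{\mu}_{\alpha,\tilde\alpha}\subseteq\mathcal{G}^{\mu\otimes\nu}_{\alpha,0}$ and $d_{\mathcal{G}^{\mu\otimes\nu}_{\alpha,0}}(g,\tilde g)\le d_{\mathcal{G}^{\mu}_{\alpha,\tilde\alpha}}(g,\tilde g)$ for all $g,\tilde g\in\mathcal{G}^{\mu}_{\alpha,\tilde\alpha}$; analogously (identifying $g$ with $(x,y)\mapsto g(y)$) $\mathcal{G}^{\nu}_{\alpha,\tilde\alpha}\subseteq\mathcal{G}^{\mu\otimes\nu}_{\alpha,0}$ and $d_{\mathcal{G}^{\mu\otimes\nu}_{\alpha,0}}(g,\tilde g)\le d_{\mathcal{G}^{\nu}_{\alpha,\tilde\alpha}}(g,\tilde g)$ for $g,\tilde g\in\mathcal{G}^{\nu}_{\alpha,\tilde\alpha}$.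
   Context: $\mathcal{X}$ is a Polish space with metric $d_{\mathcal{X}}$, $x_0$ fixed, $B_r=\{x:d_{\mathcal{X}}(x_0,x)\le r\}$, $B_r^{\mathsf c}=\mathcal{X}\setminus B_r$. On $\mathcal{X}\times\mathcal{X}$ use the metric $\max\{d_{\mathcal{X}}(x,\tilde x),d_{\mathcal{X}}(y,\tilde y)\}$ and $\bar B_r=\{\bar x\in\mathcal{X}\times\mathcal{X}: \text{distance from }(x_0,x_0)\le r\}$. A tail function is a non-increasing $\alpha:(0,\infty)\to[0,\infty)$ with $\lim_{r\to\infty}\alpha(r)=0$. For $\rho\in\mathcal{P}(\mathcal{X})$: $\mathcal{F}^{\rho}_{\alpha,\tilde\alpha}$ is the set of $f\in L^2(\rho)$ with $f\mathbf 1_{B_{m_2}}\ge0$ $\rho$-a.s., $\int_{B_r^{\mathsf c}}f_+\,d\rho\le\alpha(r)\int f\,d\rho$ for all $r\ge m_1$, $\int_{B_r^{\mathsf c}}f_-\,d\rho\le\tilde\alpha(r)\int f\,d\rho$ for all $r\ge m_2$; $\mathcal{G}^{\rho}_{\alpha,\tilde\alpha}=\{g\in L^2(\rho):\int fg\,d\rho\ge0\ \forall f\in\mathcal{F}^{\rho}_{\alpha,\tilde\alpha}\}$. On the product: $\mathcal{F}^{\mu\otimes\nu}_{\alpha,0}=\{f\in L^2(\mu\otimes\nu): f\ge0,\ \int_{\bar B_r^{\mathsf c}}f\,d\mu\otimes\nu\le\alpha(r)\int f\,d\mu\otimes\nu\text{ for all }r\ge m\}$ and $\mathcal{G}^{\mu\otimes\nu}_{\alpha,0}=\{g\in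 L^2(\mu\otimes\nu):\int fg\,d\mu\otimes\nu\ge0\ \forall f\in\mathcal{F}^{\mu\otimes\nu}_{\alpha,0}\}$. Hilbert's metric for a cone $C$: $f\le_C g$ iff $g-f\in C$; $f\sim_C g$ iff $f\le_C bg$ and $g\le_C b'f$ for some $b,b'>0$; $M(f,g)=\inf\{b>0:bg-f\in C\}$, $m(f,g)=\sup\{a>0:f-ag\in C\}$; $d_C(f,g)=\log(M/m)$ if $f\sim_C g$, $g\ne0$, and $\infty$ otherwise. *)

(* Defs.v *)
From HB Require Import structures.
From mathcomp Require Import all_boot all_order all_algebra.
From mathcomp Require Import all_classical all_reals all_analysis.
Set Implicit Arguments. Unset Strict Implicit. Unset Printing Implicit Defensive.
Import Order.TTheory GRing.Theory Num.Theory.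
Local Open Scope classical_set_scope.
Local Open Scope ring_scope.

Section defs.
Context (R : realType).

Definition is_metric (T : Type) (dX : T -> T -> R) : Prop :=
  [/\ (forall x, dX x x = 0), (forall x y, dX x y = 0 -> x = y),
      (forall x y, dX x y = dX y x) &
      (forall x y z, dX x z <= dX x y + dX y z)].

Definition metric_open (T : Type) (dX : T -> T -> R) (O : set T) : Prop :=
  forall x, O x -> exists2 e : R, 0 < e & [set y | dX x y < e] `<=` O.

Definition metric_separable (T : Type) (dX : T -> T -> R) : Prop :=
  exists D : set T, countable D /\
    forall x (e : R), 0 < e -> exists2 y, D y & dX x y < e.

Definition metric_complete (T : Type) (dX : T -> T -> R) : Prop :=
  forall u : nat -> T,
    (forall e : R, 0 < e -> exists N, forall n k, (N <= n)%N -> (N <= k)%N ->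
        dX (u n) (u k) < e) ->
    exists l, forall e : R, 0 < e -> exists N, forall n, (N <= n)%N ->
        dX (u n) l < e.

Definition polish_metric d (T : measurableType d) (dX : T -> T -> R) : Prop :=
  [/\ is_metric dX, metric_separable dX, metric_complete dX &
      (@measurable d T = <<s [set O | metric_open dX O] >>)].

Definition cball0 (T : Type) (dX : T -> T -> R) (x0 : T) (r : R) : set T :=
  [set x | dX x0 x <= r].
Definition prod_cball0 (T : Type) (dX : T -> T -> R) (x0 : T) (r : R) : set (T * T) :=
  [set p | Num.max (dX x0 p.1) (dX x0 p.2) <= r].

(* ---------- tail functions (only their values on (0,oo) matter) ---------- *)
Definition tail_function (a : R -> R) : Prop :=
  [/\ (forall r s, 0 < r -> r <= s -> a s <= a r),
      (forall r, 0 < r -> 0 <= a r) &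
      a r @[r --> +oo] --> 0].

Definition L2 d (T : measurableType d) (rho : {measure set T -> \bar R})
  (f : T -> R) : Prop :=
  measurable_fun setT f /\ (\int[rho]_x ((`|f x| ^+ 2)%:E) < +oo)%E.

Definition Fcone d (T : measurableType d) (dX : T -> T -> R) (x0 : T)
  (rho : {measure set T -> \bar R}) (m : R) (a ta : R -> R) : set (T -> R) :=
  [set f | [/\ L2 rho f,
     {ae rho, forall x, cball0 dX x0 m x -> 0 <= f x},
     (forall r, m <= r ->
        (\int[rho]_(x in ~` cball0 dX x0 r) ((f^\+ x)%:E)
          <= (a r)%:E * \int[rho]_x ((f x)%:E))%E) &
     (forall r, m <= r ->
        (\int[rho]_(x in ~` cball0 dX x0 r) ((f^\- x)%:E)
          <= (ta r)%:E * \int[rho]_x ((f x)%:E))%E)]].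

Definition Gcone d (T : measurableType d) (rho : {measure set T -> \bar R})
  (F : set (T -> R)) : set (T -> R) :=
  [set g | L2 rho g /\
     forall f, F f -> (0 <= \int[rho]_x ((f x * g x)%:E))%E].

Definition Fcone_prod d (T : measurableType d) (dX : T -> T -> R) (x0 : T)
  (P : {measure set (T * T) -> \bar R}) (m : R) (a : R -> R)
  : set (T * T -> R) :=
  [set f | [/\ L2 P f,
     {ae P, forall p, 0 <= f p} &
     (forall r, m <= r ->
        (\int[P]_(p in ~` prod_cball0 dX x0 r) ((f p)%:E)
          <= (a r)%:E * \int[P]_p ((f p)%:E))%E)]].

Definition cone_le (T : Type) (C : set (T -> R)) (f g : T -> R) : Prop :=
  C (fun x => g x - f x).

Definition cone_sim (T : Type) (C : set (T -> R)) (f g : T -> R) : Prop :=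
  exists b b' : R, [/\ 0 < b, 0 < b',
    cone_le C f (fun x => b * g x) & cone_le C g (fun x => b' * f x)].

Definition hM (T : Type) (C : set (T -> R)) (f g : T -> R) : \bar R :=
  ereal_inf [set b%:E | b in [set b : R | 0 < b /\ C (fun x => b * g x - f x)]].

Definition hm (T : Type) (C : set (T -> R)) (f g : T -> R) : \bar R :=
  ereal_sup [set a%:E | a in [set a : R | 0 < a /\ C (fun x => f x - a * g x)]].

(* g <> 0 in L^2(rho): g is not rho-a.e. zero.
   d_C(f,g) = log (M/m) = lne M - lne m  (in \bar R), +oo otherwise *)
Definition hilbert_metric d (T : measurableType d)
  (rho : {measure set T -> \bar R}) (C : set (T -> R)) (f g : T -> R)
  : \bar R :=
  if `[< cone_sim C f g /\ ~ {ae rho, forall x, g x = 0} >]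
  then (lne (hM C f g) - lne (hm C f g))%E
  else +oo%E.

End defs.

(* Main.v *)
Require Import Defs.
From HB Require Import structures.
From mathcomp Require Import all_boot all_order all_algebra.
From mathcomp Require Import all_classical all_reals all_analysis.
From mathcomp Require Import measurable_realfun.
From mathcomp Require Import ring lra.
Set Implicit Arguments. Unset Strict Implicit. Unset Printing Implicit Defensive.
Import Order.TTheory GRing.Theory Num.Theory.
Local Open Scope classical_set_scope.
Local Open Scope ring_scope.
Section gen.
Local Open Scope ereal_scope.
Context (R : realType) d (T : measurableType d) (rho : {measure set T -> \bar R}).
Hypothesis rhofin : rho setT < +oo.

Lemma normr_le_1sqr (t : R) : (`|t| <= 1 + `|t| ^+ 2)%R.
Proof. have := normr_ge0 t; set u := `|t|%R; nra. Qed.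

Lemma L2_int h : L2 rho h -> rho.-integrable setT (EFin \o h).
Proof.
case=> mh ih; apply/integrableP; split; first exact/measurable_EFinP.
apply: (@le_lt_trans _ _ (\int[rho]_x ((1 + `|h x| ^+ 2)%:E))).
  apply: ge0_le_integral => //.
  - by apply: measurableT_comp => //; exact/measurable_EFinP.
  - apply/measurable_EFinP; apply: measurable_funD => //.
    by apply: measurable_funX; exact: measurableT_comp.
  - by move=> x _ /=; rewrite lee_fin normr_le_1sqr.
under eq_integral do rewrite EFinD.
rewrite ge0_integralD //.
- rewrite integral_cst // mul1e; apply: lte_add_pinfty => //.
- by apply/measurable_EFinP; apply: measurable_funX; exact: measurableT_comp.
Qed.



Lemma sqrn (t : R) : (`|t| ^+ 2 = t ^+ 2)%R.
Proof. exact: real_normK (num_real _). Qed.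

Lemma int_cst (c : R) : rho.-integrable setT (EFin \o cst c).
Proof.
apply: L2_int => //; split => //.
have -> : \int[rho]_x ((`|cst c x| ^+ 2)%:E) = \int[rho]_x (cst (`|c| ^+ 2)%:E x) by [].
by rewrite integral_cst //= lte_mul_pinfty.
Qed.

Lemma L2_sqr_int h : L2 rho h -> rho.-integrable setT (EFin \o (fun x => h x ^+ 2)%R).
Proof.
case=> mh ih; apply/integrableP; split.
  by apply/measurable_EFinP; exact: measurable_funX.
rewrite (eq_integral (fun x => (`|h x| ^+ 2)%:E)) // => x _.
by rewrite /= normrX.
Qed.

Lemma L2_mul_int h k : L2 rho h -> L2 rho k ->
  rho.-integrable setT (EFin \o (fun x => h x * k x)%R).
Proof.
move=> [mh ih] [mk ik]; apply/integrableP; split.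
  by apply/measurable_EFinP; exact: measurable_funM.
apply: (@le_lt_trans _ _ (\int[rho]_x ((`|h x| ^+ 2)%:E + (`|k x| ^+ 2)%:E))).
  apply: ge0_le_integral => //.
  - apply: measurableT_comp => //; apply/measurable_EFinP.
    exact: measurable_funM.
  - apply: emeasurable_funD; apply/measurable_EFinP;
      by apply: measurable_funX; exact: measurableT_comp.
  - move=> x _ /=; rewrite -EFinD lee_fin normrM.
    have := normr_ge0 (h x); have := normr_ge0 (k x).
    set u := `|h x|%R; set v := `|k x|%R; nra.
rewrite ge0_integralD //; first exact: lte_add_pinfty.
- by apply/measurable_EFinP; apply: measurable_funX; exact: measurableT_comp.
- by apply/measurable_EFinP; apply: measurable_funX; exact: measurableT_comp.
Qed.

Lemma jensen h : rho setT = 1 -> L2 rho h ->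
  ((Rintegral rho setT h) ^+ 2)%:E <= \int[rho]_x ((`|h x| ^+ 2)%:E).
Proof.
move=> rho1 L; have ih := @L2_int h L; have i2 := @L2_sqr_int h L.
set c := Rintegral rho setT h.
have H0 : (0 <= Rintegral rho setT (fun x => (h x - c) ^+ 2))%R.
  by apply: Rintegral_ge0 => x _; exact: sqr_ge0.
have E : (Rintegral rho setT (fun x => (h x - c) ^+ 2) =
   Rintegral rho setT (fun x => h x ^+ 2) + c ^+ 2 - 2 * c * c)%R.
  have -> : (Rintegral rho setT (fun x => (h x - c) ^+ 2) =
     Rintegral rho setT (fun x => (h x ^+ 2 + c ^+ 2) - (2 * c) * h x))%R.
    by apply: eq_Rintegral => x _; ring.
  rewrite RintegralB //; last first.
    by apply: (eq_integrable _ _ _ _ (integrableZl _ (2 * c) ih)) => //= x _; rewrite EFinM.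
    by apply: (eq_integrable _ _ _ _ (integrableD _ i2 (int_cst (c ^+ 2)))) => // x _.
  rewrite RintegralD //; last exact: int_cst.
  by rewrite (@Rintegral_cst _ _ _ rho setT measurableT (c ^+ 2)) RintegralZl // rho1 /= mulr1 /c.
have HI : (c ^+ 2 <= Rintegral rho setT (fun x => h x ^+ 2))%R by move: H0; rewrite E; lra.
have fin : \int[rho]_x ((h x ^+ 2)%:E) \is a fin_num by exact: integrable_fin_num i2.
under eq_integral do rewrite sqrn.
by rewrite -(fineK fin) lee_fin.
Qed.

End gen.
Section main.
Local Open Scope ereal_scope.
Context (R : realType) (d : measure_display) (X : measurableType d)
  (dX : X -> X -> R) (x0 : X) (mu nu : probability X R).
Hypothesis pol : polish_metric dX.
Let P := (mu \x nu)%E.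

Lemma P1 : P setT = 1.
Proof.
rewrite -setXTT /P product_measure1E //.
have := congr2 (fun u v => u * v) (probability_setT mu) (probability_setT nu).
by rewrite mule1.
Qed.

Lemma Pfin : P setT < +oo.
Proof. by rewrite P1 ltry. Qed.

Lemma mballC (r : R) : measurable (~` cball0 dX x0 r).
Proof.
case: pol => [[dxx _ dsym dtri] _ _ ->].
apply: sub_sigma_algebra => x /= hx.
have rx : (r < dX x0 x)%R by rewrite ltNge; apply/negP.
exists (dX x0 x - r)%R; first by rewrite subr_gt0.
move=> y /= hy; rewrite /cball0 /= => hy2.
have := dtri x0 y x; rewrite (dsym y x); lra.
Qed.

Lemma mball (r : R) : measurable (cball0 dX x0 r).
Proof. by rewrite -[cball0 _ _ _]setCK; apply: measurableC; exact: mballC. Qed.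

Lemma mpballC (r : R) : measurable (~` prod_cball0 dX x0 r).
Proof.
have -> : ~` prod_cball0 dX x0 r =
   (~` cball0 dX x0 r) `*` setT `|` setT `*` (~` cball0 dX x0 r).
  apply/seteqP; split => [[x y]|[x y]] /=.
    rewrite /prod_cball0 /cball0 /= => h.
    have [hx|hx] := leP (dX x0 x) r.
      by right; split => // hy; apply: h; rewrite ge_max hx hy.
    by left; split => //; apply/negP; rewrite -ltNge.
  rewrite /prod_cball0 /cball0 /=.
  by case => -[h1 h2]; rewrite ge_max => /andP[h3 h4].
by apply: measurableU; apply: measurableX => //; exact: mballC.
Qed.

End main.
Section part1.
Local Open Scope ereal_scope.
Context (R : realType) (d : measure_display) (X : measurableType d)
  (dX : X -> X -> R) (x0 : X) (mu nu : probability X R).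
Hypothesis pol : polish_metric dX.
Let P := (mu \x nu)%E.
Variables (m : R) (a ta : R -> R).
Hypothesis m0 : (0 < m)%R.
Hypothesis tat : tail_function ta.

Lemma part1x f : Fcone_prod dX x0 P m a f ->
  Fcone dX x0 mu m a ta (fun x => Rintegral nu setT (fun y => f (x, y))).
Proof.
move=> [[mf if2] fae ftail].
have intf : P.-integrable setT (EFin \o f) by exact: (L2_int (Pfin mu nu) (conj mf if2)).
set F := fun x => Rintegral nu setT (fun y => f (x, y)).
have mfp : measurable_fun setT (f^\+)%R by exact: measurable_funrpos.
have mfn : measurable_fun setT (f^\-)%R by exact: measurable_funrneg.
set Gp := fun x => \int[nu]_y ((f^\+)%R (x, y))%:E.
set Gn := fun x => \int[nu]_y ((f^\-)%R (x, y))%:E.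
have mGp : measurable_fun setT Gp.
  apply: (measurable_fun_fubini_tonelli_F (EFin \o (f^\+)%R)).
    exact/measurable_EFinP.
  by move=> p /=; rewrite lee_fin funrpos_ge0.
have mGn : measurable_fun setT Gn.
  apply: (measurable_fun_fubini_tonelli_F (EFin \o (f^\-)%R)).
    exact/measurable_EFinP.
  by move=> p /=; rewrite lee_fin funrneg_ge0.
have Gp0 x : 0 <= Gp x by apply: integral_ge0 => y _; rewrite lee_fin funrpos_ge0.
have Gn0 x : 0 <= Gn x by apply: integral_ge0 => y _; rewrite lee_fin funrneg_ge0.
have fnae : {ae P, forall p, (f^\-)%R p = 0%R}.
  by apply: filterS fae => p hp; rewrite /funrneg max_r // oppr_le0.
have fpae : {ae P, forall p, (f^\+)%R p = f p}.
  by apply: filterS fae => p hp; rewrite /funrpos max_l.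
have intn0 : \int[P]_p ((f^\-)%R p)%:E = 0.
  rewrite (ae_eq_integral (cst 0)) ?integral0 //.
  - exact/measurable_EFinP.
  - by apply: filterS fnae => p hp _ /=; rewrite hp.
have Gnae : {ae mu, forall x, Gn x = 0}.
  have H : \int[mu]_x `|Gn x| = 0.
    rewrite -intn0 (fubini_tonelli1 (EFin \o (f^\-)%R)).
    - by apply: eq_integral => x _; rewrite gee0_abs.
    - exact/measurable_EFinP.
    - by move=> p /=; rewrite lee_fin funrneg_ge0.
  have := (ae_eq_integral_abs mu measurableT mGn).1 H.
  by apply: filterS => x /(_ I).
have Gpint : mu.-integrable setT Gp.
  apply/integrableP; split => //.
  under eq_integral do rewrite gee0_abs //.
  rewrite /Gp -(fubini_tonelli1 (EFin \o (f^\+)%R)).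
  - have := integrable_funrpos measurableT intf.
    case/integrableP => _; apply: le_lt_trans.
    apply: ge0_le_integral => //.
    + by move=> p _; rewrite lee_fin funrpos_ge0.
    + exact/measurable_EFinP.
    + by apply: measurableT_comp => //; exact/measurable_EFinP.
    + by move=> p _ /=; rewrite lee_fin ler_norm.
  - exact/measurable_EFinP.
  - by move=> p /=; rewrite lee_fin funrpos_ge0.
have Gpfin : {ae mu, forall x, Gp x \is a fin_num}.
  by apply: filterS (integrable_ae measurableT Gpint) => x /(_ I).
have key : {ae mu, forall x, (F x)%:E = Gp x}.
  apply: filterS2 Gnae Gpfin => x h1 h2.
  rewrite /F /Rintegral integralE.
  have -> : \int[nu]_(y in setT) ((fun y => (f (x, y))%:E)^\+ y) = Gp x.
    by apply: eq_integral => y _; rewrite -[in LHS]/((EFin \o (fun y => f (x, y)))^\+ y) funerpos.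
  have -> : \int[nu]_(y in setT) ((fun y => (f (x, y))%:E)^\- y) = Gn x.
    by apply: eq_integral => y _; rewrite -[in LHS]/((EFin \o (fun y => f (x, y)))^\- y) funerneg.
  by rewrite h1 sube0 fineK.
have mF : measurable_fun setT F.
  have -> : F = fine \o fubini_F nu (EFin \o f) by [].
  apply: measurableT_comp; first exact: fine_measurable.
  exact: measurable_fubini_F intf.
have mEF : measurable_fun setT (EFin \o F) by exact/measurable_EFinP.
have Fae0 : {ae mu, forall x, (0 <= F x)%R}.
  by apply: filterS key => x h; rewrite -lee_fin h.
have intfp : \int[P]_p ((f^\+)%R p)%:E = \int[P]_p (f p)%:E.
  apply: ae_eq_integral => //; [exact/measurable_EFinP|exact/measurable_EFinP|].
  by apply: filterS fpae => p h _; rewrite h.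
have intF : \int[mu]_x (F x)%:E = \int[P]_p (f p)%:E.
  rewrite (ae_eq_integral Gp) //; last by apply: filterS key => x h _.
  rewrite /Gp -intfp -(fubini_tonelli1 (EFin \o (f^\+)%R)) //.
    exact/measurable_EFinP.
  by move=> p /=; rewrite lee_fin funrpos_ge0.
have nu1 : nu setT = 1 := probability_setT nu.
have nufin : nu setT < +oo by rewrite nu1 ltry.
split.
- split => //.
  apply: (@le_lt_trans _ _ (\int[mu]_x fubini_F nu (fun p => (`|f p| ^+ 2)%:E) x)).
    apply: ge0_le_integral => //.
    + apply/measurable_EFinP; apply: measurable_funX; exact: measurableT_comp.
    + apply: measurable_fun_fubini_tonelli_F => //.
      apply/measurable_EFinP; apply: measurable_funX; exact: measurableT_comp.
    + move=> x _.
      set I := fubini_F nu _ x.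
      have I0 : 0 <= I by apply: integral_ge0 => y _; rewrite lee_fin exprn_ge0.
      have [fin|nfin] := boolP (I \is a fin_num).
        rewrite sqrn; apply: (jensen nufin nu1); split.
          exact: measurable_fun_pair2 mf.
        by rewrite -ge0_fin_numE.
      move: nfin; rewrite ge0_fin_numE // -leNgt leye_eq => /eqP ->; exact: leey.
  rewrite -(fubini_tonelli1 (fun p => (`|f p| ^+ 2)%:E)) //.
  apply/measurable_EFinP; apply: measurable_funX; exact: measurableT_comp.
- by apply: filterS Fae0 => x h _.
- move=> r mr.
  set D := ~` cball0 dX x0 r.
  have mD : measurable D by exact: mballC.
  set E := ~` prod_cball0 dX x0 r.
  have mE : measurable E by exact: mpballC.
  have mfpE : measurable_fun setT (EFin \o (f^\+)%R) by exact/measurable_EFinP.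
  set k := (EFin \o (f^\+)%R) \_ (D `*` [set: X]).
  set k2 := (EFin \o (f^\+)%R) \_ E.
  have k0 p : 0 <= k p by rewrite /k patchE; case: ifPn => _ //; rewrite lee_fin funrpos_ge0.
  have k20 p : 0 <= k2 p by rewrite /k2 patchE; case: ifPn => _ //; rewrite lee_fin funrpos_ge0.
  have mk : measurable_fun setT k.
    rewrite /k; apply/(@measurable_restrict _ _ _ _ (D `*` [set: X]) setT) => //.
      exact: measurableX.
    by apply: (measurable_funS measurableT (@subsetT _ _)).
  have mk2 : measurable_fun setT k2.
    rewrite /k2; apply/(@measurable_restrict _ _ _ _ E setT) => //.
    by apply: (measurable_funS measurableT (@subsetT _ _)).
  have e1 : \int[mu]_(x in D) ((F^\+)%R x)%:E = \int[mu]_(x in D) Gp x.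
    apply: ae_eq_integral => //.
    - apply: (measurable_funS measurableT (@subsetT _ _)); apply/measurable_EFinP; exact: measurable_funrpos.
    - by apply: (measurable_funS measurableT (@subsetT _ _)).
    - apply: filterS key => x h _; rewrite -h; congr EFin.
      by rewrite /funrpos max_l // -lee_fin h.
  have e2 : \int[mu]_(x in D) Gp x = \int[P]_p k p.
    rewrite integral_mkcond (fubini_tonelli1 k) //.
    apply: eq_integral => x _; rewrite /fubini_F patchE; case: ifPn => xD.
      apply: eq_integral => y _; rewrite /k patchE ifT //.
      by apply/mem_set; split => //; exact/set_mem.
    apply/esym; transitivity (\int[nu]_(y in setT) (cst 0%R y)); last exact: integral0.
    apply: eq_integral => y _.
    rewrite /k patchE ifF //; apply/negbTE/negP; rewrite inE => -[hx _].
    by move: xD; rewrite (mem_set hx).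
  have e3 : \int[P]_p k p <= \int[P]_p k2 p.
    apply: ge0_le_integral => // p _.
    rewrite /k /k2 !patchE; case: ifPn => h1; last exact: k20.
    rewrite ifT //; apply/mem_set; move: h1; rewrite inE => -[h1 _].
    move: h1; rewrite /D /E /prod_cball0 /cball0 /= => h1 h2; apply: h1.
    by move: h2; rewrite ge_max => /andP[].
  have e5 : \int[P]_(p in E) ((f^\+)%R p)%:E = \int[P]_(p in E) (f p)%:E.
    apply: ae_eq_integral => //.
    - by apply: (measurable_funS measurableT (@subsetT _ _)).
    - apply: (measurable_funS measurableT (@subsetT _ _)); exact/measurable_EFinP.
    - by apply: filterS fpae => p h _ /=; rewrite h.
  rewrite e1 e2; apply: le_trans e3 _.
  rewrite /k2 -integral_mkcond e5 intF; exact: ftail.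
- move=> r mr.
  set D := ~` cball0 dX x0 r.
  have mD : measurable D by exact: mballC.
  have -> : \int[mu]_(x in D) ((F^\-)%R x)%:E = 0.
    rewrite (ae_eq_integral (cst 0)) ?integral0 //.
    - apply: (measurable_funS measurableT (@subsetT _ _)); apply/measurable_EFinP; exact: measurable_funrneg.
    - apply: filterS Fae0 => x h _ /=; congr EFin.
      by rewrite /funrneg max_r // oppr_le0.
  apply: mule_ge0.
    case: tat => _ ta0 _; rewrite lee_fin; apply: ta0.
    exact: lt_le_trans m0 mr.
  by rewrite intF -intfp; apply: integral_ge0 => p _; rewrite lee_fin funrpos_ge0.
Qed.

Lemma part1y f : Fcone_prod dX x0 P m a f ->
  Fcone dX x0 nu m a ta (fun y => Rintegral mu setT (fun x => f (x, y))).
Proof.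
move=> [[mf if2] fae ftail].
have intf : P.-integrable setT (EFin \o f) by exact: (L2_int (Pfin mu nu) (conj mf if2)).
set F := fun x => Rintegral mu setT (fun y => f (y, x)).
have mfp : measurable_fun setT (f^\+)%R by exact: measurable_funrpos.
have mfn : measurable_fun setT (f^\-)%R by exact: measurable_funrneg.
set Gp := fun x => \int[mu]_y ((f^\+)%R (y, x))%:E.
set Gn := fun x => \int[mu]_y ((f^\-)%R (y, x))%:E.
have mGp : measurable_fun setT Gp.
  apply: (measurable_fun_fubini_tonelli_G (EFin \o (f^\+)%R)).
    exact/measurable_EFinP.
  by move=> p /=; rewrite lee_fin funrpos_ge0.
have mGn : measurable_fun setT Gn.
  apply: (measurable_fun_fubini_tonelli_G (EFin \o (f^\-)%R)).
    exact/measurable_EFinP.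
  by move=> p /=; rewrite lee_fin funrneg_ge0.
have Gp0 x : 0 <= Gp x by apply: integral_ge0 => y _; rewrite lee_fin funrpos_ge0.
have Gn0 x : 0 <= Gn x by apply: integral_ge0 => y _; rewrite lee_fin funrneg_ge0.
have fnae : {ae P, forall p, (f^\-)%R p = 0%R}.
  by apply: filterS fae => p hp; rewrite /funrneg max_r // oppr_le0.
have fpae : {ae P, forall p, (f^\+)%R p = f p}.
  by apply: filterS fae => p hp; rewrite /funrpos max_l.
have intn0 : \int[P]_p ((f^\-)%R p)%:E = 0.
  rewrite (ae_eq_integral (cst 0)) ?integral0 //.
  - exact/measurable_EFinP.
  - by apply: filterS fnae => p hp _ /=; rewrite hp.
have Gnae : {ae nu, forall x, Gn x = 0}.
  have H : \int[nu]_x `|Gn x| = 0.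
    rewrite -intn0 (fubini_tonelli2 (EFin \o (f^\-)%R)).
    - by apply: eq_integral => x _; rewrite gee0_abs.
    - exact/measurable_EFinP.
    - by move=> p /=; rewrite lee_fin funrneg_ge0.
  have := (ae_eq_integral_abs nu measurableT mGn).1 H.
  by apply: filterS => x /(_ I).
have Gpint : nu.-integrable setT Gp.
  apply/integrableP; split => //.
  under eq_integral do rewrite gee0_abs //.
  rewrite /Gp -(fubini_tonelli2 (EFin \o (f^\+)%R)).
  - have := integrable_funrpos measurableT intf.
    case/integrableP => _; apply: le_lt_trans.
    apply: ge0_le_integral => //.
    + by move=> p _; rewrite lee_fin funrpos_ge0.
    + exact/measurable_EFinP.
    + by apply: measurableT_comp => //; exact/measurable_EFinP.
    + by move=> p _ /=; rewrite lee_fin ler_norm.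
  - exact/measurable_EFinP.
  - by move=> p /=; rewrite lee_fin funrpos_ge0.
have Gpfin : {ae nu, forall x, Gp x \is a fin_num}.
  by apply: filterS (integrable_ae measurableT Gpint) => x /(_ I).
have key : {ae nu, forall x, (F x)%:E = Gp x}.
  apply: filterS2 Gnae Gpfin => x h1 h2.
  rewrite /F /Rintegral integralE.
  have -> : \int[mu]_(y in setT) ((fun y => (f (y, x))%:E)^\+ y) = Gp x.
    by apply: eq_integral => y _; rewrite -[in LHS]/((EFin \o (fun y => f (y, x)))^\+ y) funerpos.
  have -> : \int[mu]_(y in setT) ((fun y => (f (y, x))%:E)^\- y) = Gn x.
    by apply: eq_integral => y _; rewrite -[in LHS]/((EFin \o (fun y => f (y, x)))^\- y) funerneg.
  by rewrite h1 sube0 fineK.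
have mF : measurable_fun setT F.
  have -> : F = fine \o fubini_G mu (EFin \o f) by [].
  apply: measurableT_comp; first exact: fine_measurable.
  exact: measurable_fubini_G intf.
have mEF : measurable_fun setT (EFin \o F) by exact/measurable_EFinP.
have Fae0 : {ae nu, forall x, (0 <= F x)%R}.
  by apply: filterS key => x h; rewrite -lee_fin h.
have intfp : \int[P]_p ((f^\+)%R p)%:E = \int[P]_p (f p)%:E.
  apply: ae_eq_integral => //; [exact/measurable_EFinP|exact/measurable_EFinP|].
  by apply: filterS fpae => p h _; rewrite h.
have intF : \int[nu]_x (F x)%:E = \int[P]_p (f p)%:E.
  rewrite (ae_eq_integral Gp) //; last by apply: filterS key => x h _.
  rewrite /Gp -intfp -(fubini_tonelli2 (EFin \o (f^\+)%R)) //.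
    exact/measurable_EFinP.
  by move=> p /=; rewrite lee_fin funrpos_ge0.
have nu1 : mu setT = 1 := probability_setT mu.
have nufin : mu setT < +oo by rewrite nu1 ltry.
split.
- split => //.
  apply: (@le_lt_trans _ _ (\int[nu]_x fubini_G mu (fun p => (`|f p| ^+ 2)%:E) x)).
    apply: ge0_le_integral => //.
    + apply/measurable_EFinP; apply: measurable_funX; exact: measurableT_comp.
    + apply: measurable_fun_fubini_tonelli_G => //.
      apply/measurable_EFinP; apply: measurable_funX; exact: measurableT_comp.
    + move=> x _.
      set I := fubini_G mu _ x.
      have I0 : 0 <= I by apply: integral_ge0 => y _; rewrite lee_fin exprn_ge0.
      have [fin|nfin] := boolP (I \is a fin_num).
        rewrite sqrn; apply: (jensen nufin nu1); split.
          exact: measurable_fun_pair1 mf.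
        by rewrite -ge0_fin_numE.
      move: nfin; rewrite ge0_fin_numE // -leNgt leye_eq => /eqP ->; exact: leey.
  rewrite -(fubini_tonelli2 (fun p => (`|f p| ^+ 2)%:E)) //.
  apply/measurable_EFinP; apply: measurable_funX; exact: measurableT_comp.
- by apply: filterS Fae0 => x h _.
- move=> r mr.
  set D := ~` cball0 dX x0 r.
  have mD : measurable D by exact: mballC.
  set E := ~` prod_cball0 dX x0 r.
  have mE : measurable E by exact: mpballC.
  have mfpE : measurable_fun setT (EFin \o (f^\+)%R) by exact/measurable_EFinP.
  set k := (EFin \o (f^\+)%R) \_ ([set: X] `*` D).
  set k2 := (EFin \o (f^\+)%R) \_ E.
  have k0 p : 0 <= k p by rewrite /k patchE; case: ifPn => _ //; rewrite lee_fin funrpos_ge0.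
  have k20 p : 0 <= k2 p by rewrite /k2 patchE; case: ifPn => _ //; rewrite lee_fin funrpos_ge0.
  have mk : measurable_fun setT k.
    rewrite /k; apply/(@measurable_restrict _ _ _ _ ([set: X] `*` D) setT) => //.
      exact: measurableX.
    by apply: (measurable_funS measurableT (@subsetT _ _)).
  have mk2 : measurable_fun setT k2.
    rewrite /k2; apply/(@measurable_restrict _ _ _ _ E setT) => //.
    by apply: (measurable_funS measurableT (@subsetT _ _)).
  have e1 : \int[nu]_(x in D) ((F^\+)%R x)%:E = \int[nu]_(x in D) Gp x.
    apply: ae_eq_integral => //.
    - apply: (measurable_funS measurableT (@subsetT _ _)); apply/measurable_EFinP; exact: measurable_funrpos.
    - by apply: (measurable_funS measurableT (@subsetT _ _)).
    - apply: filterS key => x h _; rewrite -h; congr EFin.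
      by rewrite /funrpos max_l // -lee_fin h.
  have e2 : \int[nu]_(x in D) Gp x = \int[P]_p k p.
    rewrite integral_mkcond (fubini_tonelli2 k) //.
    apply: eq_integral => x _; rewrite /fubini_G patchE; case: ifPn => xD.
      apply: eq_integral => y _; rewrite /k patchE ifT //.
      by apply/mem_set; split => //; exact/set_mem.
    apply/esym; transitivity (\int[mu]_(y in setT) (cst 0%R y)); last exact: integral0.
    apply: eq_integral => y _.
    rewrite /k patchE ifF //; apply/negbTE/negP; rewrite inE => -[_ hx].
    by move: xD; rewrite (mem_set hx).
  have e3 : \int[P]_p k p <= \int[P]_p k2 p.
    apply: ge0_le_integral => // p _.
    rewrite /k /k2 !patchE; case: ifPn => h1; last exact: k20.
    rewrite ifT //; apply/mem_set; move: h1; rewrite inE => -[_ h1].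
    move: h1; rewrite /D /E /prod_cball0 /cball0 /= => h1 h2; apply: h1.
    by move: h2; rewrite ge_max => /andP[_].
  have e5 : \int[P]_(p in E) ((f^\+)%R p)%:E = \int[P]_(p in E) (f p)%:E.
    apply: ae_eq_integral => //.
    - by apply: (measurable_funS measurableT (@subsetT _ _)).
    - apply: (measurable_funS measurableT (@subsetT _ _)); exact/measurable_EFinP.
    - by apply: filterS fpae => p h _ /=; rewrite h.
  rewrite e1 e2; apply: le_trans e3 _.
  rewrite /k2 -integral_mkcond e5 intF; exact: ftail.
- move=> r mr.
  set D := ~` cball0 dX x0 r.
  have mD : measurable D by exact: mballC.
  have -> : \int[nu]_(x in D) ((F^\-)%R x)%:E = 0.
    rewrite (ae_eq_integral (cst 0)) ?integral0 //.
    - apply: (measurable_funS measurableT (@subsetT _ _)); apply/measurable_EFinP; exact: measurable_funrneg.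
    - apply: filterS Fae0 => x h _ /=; congr EFin.
      by rewrite /funrneg max_r // oppr_le0.
  apply: mule_ge0.
    case: tat => _ ta0 _; rewrite lee_fin; apply: ta0.
    exact: lt_le_trans m0 mr.
  by rewrite intF -intfp; apply: integral_ge0 => p _; rewrite lee_fin funrpos_ge0.
Qed.

Lemma part2x g : Gcone mu (Fcone dX x0 mu m a ta) g ->
  Gcone P (Fcone_prod dX x0 P m a) (fun p => g p.1).
Proof.
move=> [[mg ig] gpos].
have nu1 : nu setT = 1 := probability_setT nu.
have mg1 : measurable_fun setT (fun p : X * X => g p.1) by exact: measurableT_comp mg measurable_fst.
have L2g : L2 P (fun p => g p.1).
  split => //.
  rewrite (fubini_tonelli1 (fun p => (`|g p.1| ^+ 2)%:E)) //; last first.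
    apply/measurable_EFinP; apply: measurable_funX; exact: measurableT_comp.
  have -> : \int[mu]_x fubini_F nu (fun p => (`|g p.1| ^+ 2)%:E) x =
      \int[mu]_x (`|g x| ^+ 2)%:E.
    apply: eq_integral => x _; rewrite /fubini_F /=.
    rewrite (integral_cst nu measurableT ((`|g x| ^+ 2)%:E)).
    by rewrite -[RHS]mule1; congr (_ * _); exact: probability_setT.
  exact: ig.
split => // f Ff.
have Ff' := Ff; case: Ff' => [[mf if2] fae ftail].
have intf : P.-integrable setT (EFin \o f) by exact: (L2_int (Pfin mu nu) (conj mf if2)).
have intfg : P.-integrable setT (EFin \o (fun p => f p * g p.1)%R).
  exact: (L2_mul_int (conj mf if2) L2g).
have hF := part1x Ff.
rewrite -(integral12_prod_meas1 intfg).
set F := fun x => Rintegral nu setT (fun y => f (x, y)).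
have mF : measurable_fun setT F by case: hF => -[].
rewrite (ae_eq_integral (fun x => (F x * g x)%:E)) //; first exact: gpos.
- exact: measurable_fubini_F intfg.
- by apply/measurable_EFinP; exact: measurable_funM.
- apply: filterS (ae_integrable1 intf) => x ix _.
  rewrite /fubini_F /=.
  have -> : \int[nu]_y (f (x, y) * g x)%:E = (g x)%:E * \int[nu]_y (f (x, y))%:E.
    rewrite -integralZl //; apply: eq_integral => y _.
    by rewrite -EFinM mulrC.
  have fin : \int[nu]_y (f (x, y))%:E \is a fin_num by exact: integrable_fin_num ix.
  by rewrite /F /Rintegral EFinM (fineK fin) muleC.
Qed.

Lemma part2y g : Gcone nu (Fcone dX x0 nu m a ta) g ->
  Gcone P (Fcone_prod dX x0 P m a) (fun p => g p.2).
Proof.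
move=> [[mg ig] gpos].
have nu1 : mu setT = 1 := probability_setT mu.
have mg1 : measurable_fun setT (fun p : X * X => g p.2) by exact: measurableT_comp mg measurable_snd.
have L2g : L2 P (fun p => g p.2).
  split => //.
  rewrite (fubini_tonelli2 (fun p => (`|g p.2| ^+ 2)%:E)) //; last first.
    apply/measurable_EFinP; apply: measurable_funX; exact: measurableT_comp.
  have -> : \int[nu]_x fubini_G mu (fun p => (`|g p.2| ^+ 2)%:E) x =
      \int[nu]_x (`|g x| ^+ 2)%:E.
    apply: eq_integral => x _; rewrite /fubini_G /=.
    rewrite (integral_cst mu measurableT ((`|g x| ^+ 2)%:E)).
    by rewrite -[RHS]mule1; congr (_ * _); exact: probability_setT.
  exact: ig.
split => // f Ff.
have Ff' := Ff; case: Ff' => [[mf if2] fae ftail].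
have intf : P.-integrable setT (EFin \o f) by exact: (L2_int (Pfin mu nu) (conj mf if2)).
have intfg : P.-integrable setT (EFin \o (fun p => f p * g p.2)%R).
  exact: (L2_mul_int (conj mf if2) L2g).
have hF := part1y Ff.
rewrite -(integral21_prod_meas1 intfg).
set F := fun x => Rintegral mu setT (fun y => f (y, x)).
have mF : measurable_fun setT F by case: hF => -[].
rewrite (ae_eq_integral (fun x => (F x * g x)%:E)) //; first exact: gpos.
- exact: measurable_fubini_G intfg.
- by apply/measurable_EFinP; exact: measurable_funM.
- apply: filterS (ae_integrable2 intf) => x ix _.
  rewrite /fubini_G /=.
  have -> : \int[mu]_y (f (y, x) * g x)%:E = (g x)%:E * \int[mu]_y (f (y, x))%:E.
    rewrite -integralZl //; apply: eq_integral => y _.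
    by rewrite -EFinM mulrC.
  have fin : \int[mu]_y (f (y, x))%:E \is a fin_num by exact: integrable_fin_num ix.
  by rewrite /F /Rintegral EFinM (fineK fin) muleC.
Qed.

End part1.

Section hilb.
Local Open Scope ereal_scope.
Context (R : realType).

Lemma lne_le (x y : \bar R) : x <= y -> lne x <= lne y.
Proof.
move=> hxy; have [x0|x0] := leP x 0; first by rewrite le0_lneNy // leNye.
rewrite lee_lne // in_itv /= leey andbT ?(ltW x0) //.
exact: le_trans (ltW x0) hxy.
Qed.

Lemma hilbert_mono d1 d2 (T1 : measurableType d1) (T2 : measurableType d2)
  (rho1 : {measure set T1 -> \bar R}) (rho2 : {measure set T2 -> \bar R})
  (C1 : set (T1 -> R)) (C2 : set (T2 -> R)) (pi : T2 -> T1) (g g' : T1 -> R) :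
  (forall h, C1 h -> C2 (fun p => h (pi p))) ->
  ({ae rho2, forall p, g' (pi p) = 0%R} -> {ae rho1, forall x, g' x = 0%R}) ->
  hilbert_metric rho2 C2 (fun p => g (pi p)) (fun p => g' (pi p)) <=
  hilbert_metric rho1 C1 g g'.
Proof.
move=> incl null; rewrite /hilbert_metric.
case: (asboolP (cone_sim C1 g g' /\ ~ {ae rho1, forall x, g' x = 0%R})) => [[sim nz]|_];
  last exact: leey.
rewrite asboolT; last first.
  split; last by move/null.
  case: sim => b [b' [b0 b'0 h1 h2]]; exists b, b'; split => //.
    exact: (incl _ h1).
  exact: (incl _ h2).
apply: leeD.
  apply: lne_le; apply: le_ereal_inf.
  by move=> _ [b [b0 hb] <-]; exists b => //; split => //; exact: (incl _ hb).
rewrite leeN2; apply: lne_le; apply: le_ereal_sup.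
by move=> _ [b [b0 hb] <-]; exists b => //; split => //; exact: (incl _ hb).
Qed.

End hilb.

Section null.
Local Open Scope ereal_scope.
Context (R : realType) (d : measure_display) (X : measurableType d) (mu nu : probability X R).
Let P := (mu \x nu)%E.

Lemma nullx (g : X -> R) : measurable_fun setT g ->
  {ae P, forall p, g p.1 = 0%R} -> {ae mu, forall x, g x = 0%R}.
Proof.
move=> mg [N [mN PN sub]].
set S := g @^-1` (~` [set 0%R]).
have mS : measurable S.
  by rewrite /S -[_ @^-1` _]setTI; apply: mg => //; apply: measurableC.
exists S; split => //.
apply/eqP; rewrite -measure_le0.
have : P (S `*` [set: X]) <= P N.
  apply: le_measure; rewrite ?inE //; first exact: measurableX.
  by move=> [x y] [hx _]; apply: sub => /= h; apply: hx.
rewrite PN /P product_measure1E // => h; apply: le_trans h.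
rewrite le_eqVlt; apply/orP; left; apply/eqP.
rewrite -[LHS]mule1; congr (_ * _); apply/esym; exact: probability_setT.
Qed.

Lemma nully (g : X -> R) : measurable_fun setT g ->
  {ae P, forall p, g p.2 = 0%R} -> {ae nu, forall x, g x = 0%R}.
Proof.
move=> mg [N [mN PN sub]].
set S := g @^-1` (~` [set 0%R]).
have mS : measurable S.
  by rewrite /S -[_ @^-1` _]setTI; apply: mg => //; apply: measurableC.
exists S; split => //.
apply/eqP; rewrite -measure_le0.
have : P ([set: X] `*` S) <= P N.
  apply: le_measure; rewrite ?inE //; first exact: measurableX.
  by move=> [x y] [_ hx]; apply: sub => /= h; apply: hx.
rewrite PN /P product_measure1E // => h; apply: le_trans h.
rewrite le_eqVlt; apply/orP; left; apply/eqP.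
rewrite -[LHS]mul1e; congr (_ * _); apply/esym; exact: probability_setT.
Qed.

End null.

Unset Implicit Arguments.

Theorem lemma5p6 (R : realType) (d : measure_display) (X : measurableType d)
  (dX : X -> X -> R) (x0 : X) (mu nu : probability X R) (m : R)
  (a ta : R -> R) :
  polish_metric dX ->
  0 < m ->
  (0 < mu (cball0 dX x0 m))%E -> (0 < nu (cball0 dX x0 m))%E ->
  tail_function a -> (forall r, 0 < r -> 0 < a r) ->
  tail_function ta ->
  let P := (mu \x nu)%E in
  (forall f, Fcone_prod dX x0 P m a f ->
     Fcone dX x0 mu m a ta (fun x => Rintegral nu setT (fun y => f (x, y))) /\
     Fcone dX x0 nu m a ta (fun y => Rintegral mu setT (fun x => f (x, y)))) /\
  (forall g, Gcone mu (Fcone dX x0 mu m a ta) g ->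
     Gcone P (Fcone_prod dX x0 P m a) (fun p => g p.1)) /\
  (forall g g', Gcone mu (Fcone dX x0 mu m a ta) g ->
     Gcone mu (Fcone dX x0 mu m a ta) g' ->
     (hilbert_metric P (Gcone P (Fcone_prod dX x0 P m a))
        (fun p => g p.1) (fun p => g' p.1)
      <= hilbert_metric mu (Gcone mu (Fcone dX x0 mu m a ta)) g g')%E) /\
  (forall g, Gcone nu (Fcone dX x0 nu m a ta) g ->
     Gcone P (Fcone_prod dX x0 P m a) (fun p => g p.2)) /\
  (forall g g', Gcone nu (Fcone dX x0 nu m a ta) g ->
     Gcone nu (Fcone dX x0 nu m a ta) g' ->
     (hilbert_metric P (Gcone P (Fcone_prod dX x0 P m a))
        (fun p => g p.2) (fun p => g' p.2)
      <= hilbert_metric nu (Gcone nu (Fcone dX x0 nu m a ta)) g g')%E).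
Proof.
move=> pol m0 _ _ _ _ tat P.
have I1 : forall g, Gcone mu (Fcone dX x0 mu m a ta) g ->
    Gcone P (Fcone_prod dX x0 P m a) (fun p => g p.1).
  by move=> g hg; exact: (part2x nu pol m0 tat hg).
have I2 : forall g, Gcone nu (Fcone dX x0 nu m a ta) g ->
    Gcone P (Fcone_prod dX x0 P m a) (fun p => g p.2).
  by move=> g hg; exact: (part2y mu pol m0 tat hg).
split.
  by move=> f Ff; split; [exact: (part1x pol m0 tat Ff) | exact: (part1y pol m0 tat Ff)].
split; first exact: I1.
split.
  move=> g g' hg hg'.
  apply: (@hilbert_mono _ _ _ _ _ _ _ _ _ fst g g' I1).
  by move=> h; apply: (nullx _ h); case: hg' => -[].
split; first exact: I2.
move=> g g' hg hg'.
apply: (@hilbert_mono _ _ _ _ _ _ _ _ _ snd g g' I2).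
by move=> h; apply: (nully _ h); case: hg' => -[].
Qed.
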